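(* Let $G$ be a connected graph on $n$ vertices with distance squared matrix $\Delta$. Let $v$ be a vertex of degree $2$ whose removal disconnects $G$, and let $u,w$ be the two neighbors of $v$. Define $\mathbf x\in\mathbb R^n$ by $x_u=x_w=1$, $x_v=-2$, and $x_i=0$ for all other vertices $i$. Then $\Delta\mathbf x=2\cdot\mathbf 1$, where $\mathbf 1$ is the all-ones vector.
   Context: For a connected graph $G$ with vertices $1,\dots,n$, the distance squared matrix $\Delta$ is the $n\times n$ matrix with $(i,j)$ entry $d_{ij}^2$, where $d_{ij}$ is the graph distance between $i$ and $j$ (with $d_{ii}=0$). *)

(* Defs.v *)
From mathcomp Require Import all_boot all_order all_algebra.
Set Implicit Arguments. Unset Strict Implicit. Unset Printing Implicit Defensive.
Import Order.TTheory GRing.Theory Num.Theory.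

Definition simple_graph (n : nat) (e : rel 'I_n) : Prop :=
  symmetric e /\ irreflexive e.

Definition connected_graph (n : nat) (e : rel 'I_n) : Prop :=
  forall i j, connect e i j.

Fixpoint within (n : nat) (e : rel 'I_n) (k : nat) (i j : 'I_n) : bool :=
  match k with
  | 0 => i == j
  | k'.+1 => within e k' i j || [exists l, e i l && within e k' l j]
  end.

(* Graph distance: least k (< n) such that j is reachable from i in at most
   k steps; for connected graphs this is the usual shortest-path distance
   (which is always < n). *)
Definition gdist (n : nat) (e : rel 'I_n) (i j : 'I_n) : nat :=
  find (fun k => within e k i j) (iota 0 n).

Definition dist_sq_mx (R : nzRingType) (n : nat) (e : rel 'I_n) : 'M[R]_n :=
  \matrix_(i, j) (((gdist e i j) ^ 2)%N%:R)%R.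

(* Graph obtained by deleting vertex v (v kept as an isolated vertex that we
   ignore): edges not incident to v. *)
Definition del_vertex (n : nat) (e : rel 'I_n) (v : 'I_n) : rel 'I_n :=
  fun x y => [&& e x y, x != v & y != v].

Definition cut_vertex (n : nat) (e : rel 'I_n) (v : 'I_n) : Prop :=
  exists a b : 'I_n, [/\ a != v, b != v & ~~ connect (del_vertex e v) a b].

Definition degree (n : nat) (e : rel 'I_n) (v : 'I_n) : nat := #|[set j | e v j]|.

(* Main.v *)
Require Import Defs.
From mathcomp Require Import all_boot all_order all_algebra.
From mathcomp Require Import zify ring.
Import GRing.Theory Num.Theory.

Set Implicit Arguments. Unset Strict Implicit.
Section Walks.
Variables (n : nat) (e : rel 'I_n).

Lemma within_S k i j : within e k i j -> within e k.+1 i j.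
Proof. by move=> H /=; rewrite H. Qed.

Lemma within_mono k k' i j : (k <= k')%N -> within e k i j -> within e k' i j.
Proof.
elim: k' => [|k' IH]; first by rewrite leqn0 => /eqP ->.
rewrite leq_eqVlt => /orP [/eqP -> //|]; rewrite ltnS => /IH H /H.
exact: within_S.
Qed.

Lemma within_edge k a b j : e a b -> within e k b j -> within e k.+1 a j.
Proof. by move=> eab H /=; apply/orP; right; apply/existsP; exists b; rewrite eab. Qed.

Lemma within_last k i l j : within e k i l -> e l j -> within e k.+1 i j.
Proof.
elim: k i => [|k IH] i.
  by move=> /= /eqP -> elj; apply/orP; right; apply/existsP; exists j; rewrite elj eqxx.
move=> /orP [H|/existsP [m /andP [eim H]]] elj.
  by apply/orP; left; apply: IH.
exact: (within_edge eim (IH _ H elj)).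
Qed.

Lemma within_sym k i j : symmetric e -> within e k i j -> within e k j i.
Proof.
move=> sym; elim: k i j => [|k IH] i j; first by rewrite /= eq_sym.
move=> /orP [H|/existsP [l /andP [eil H]]].
  exact: (within_S (IH _ _ H)).
by apply: (within_last (IH _ _ H)); rewrite sym.
Qed.

Lemma path_within i p : path e i p -> within e (size p) i (last i p).
Proof.
elim: p i => [|a p IH] i /=; first by rewrite eqxx.
by move=> /andP [eia H]; apply: (within_edge eia); apply: IH.
Qed.

Lemma conn_within i j : connect e i j -> exists k, (k < n)%N /\ within e k i j.
Proof.
move=> /connectP [p pth ->].
case: (shortenP pth) => p' pth' uq _.
exists (size p'); split; last exact: path_within.
have := max_card (mem (i :: p')).
by rewrite card_ord (card_uniqP uq).
Qed.

Lemma gdist_le k i j : within e k i j -> (gdist e i j <= k)%N.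
Proof.
move=> H; rewrite /gdist.
case: (ltnP k n) => Hk; last first.
  by apply: leq_trans Hk; have := find_size (fun k => within e k i j) (iota 0 n); rewrite size_iota.
rewrite leqNgt; apply/negP => /(before_find 0).
by rewrite nth_iota // add0n H.
Qed.

Lemma gdist_within i j : connect e i j -> within e (gdist e i j) i j.
Proof.
move=> /conn_within [k [Hk H]].
have hs : has (fun k => within e k i j) (iota 0 n).
  by apply/hasP; exists k => //; rewrite mem_iota.
have hf : (find (fun k => within e k i j) (iota 0 n) < n)%N.
  by rewrite -[X in (_ < X)%N](size_iota 0 n) -has_find.
by have := nth_find 0 hs; rewrite nth_iota // add0n.
Qed.

Lemma gdist_sym i j : symmetric e -> connected_graph e -> gdist e i j = gdist e j i.
Proof.
move=> sym conn; apply/eqP; rewrite eqn_leq.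
by rewrite !gdist_le // within_sym // gdist_within.
Qed.

Lemma within_first k i j : i != j -> within e k i j ->
  exists k', k = k'.+1 /\ exists l, e i l /\ within e k' l j.
Proof.
move=> ij; elim: k => [|k IH]; first by move=> /= /eqP eij; rewrite eij eqxx in ij.
move=> /orP [H|/existsP [l /andP [eil H]]].
  have [k' [-> [l [eil Hl]]]] := IH H.
  by exists k'.+1; split => //; exists l; split => //; apply: within_S.
by exists k; split => //; exists l.
Qed.

End Walks.
Set Implicit Arguments. Unset Strict Implicit.

Section Cut.
Variables (n : nat) (e : rel 'I_n) (v : 'I_n).
Hypothesis sym : symmetric e.

Lemma del_sym : symmetric (del_vertex e v).
Proof. by move=> x y; rewrite /del_vertex sym; case: (x != v); case: (y != v); rewrite /= ?andbF. Qed.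

Lemma del_connC x y : connect (del_vertex e v) x y = connect (del_vertex e v) y x.
Proof. exact: (sym_connect_sym del_sym). Qed.

Lemma cut_walk j k a : a != v -> ~~ connect (del_vertex e v) a j ->
  within e k a j -> (gdist e v j < k)%N.
Proof.
elim: k a => [|k IH] a av nc.
  by move=> /= /eqP aj; rewrite aj connect0 in nc.
move=> /orP [H|/existsP [l /andP [eal H]]].
  by apply: leq_trans (IH _ av nc H) _.
case: (eqVneq l v) => [lv|lv].
  by rewrite ltnS; apply: gdist_le; rewrite -lv.
have nc' : ~~ connect (del_vertex e v) l j.
  apply: contra nc => c; apply: connect_trans c.
  by apply: connect1; rewrite /del_vertex eal av lv.
by apply: leq_trans (IH _ lv nc' H) _.
Qed.

Variables (u w : 'I_n).
Hypothesis hdeg : forall l, e v l -> l = u \/ l = w.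

Lemma reach k a : a != v -> within e k a v ->
  connect (del_vertex e v) a u || connect (del_vertex e v) a w.
Proof.
elim: k a => [|k IH] a av.
  by move=> /= /eqP aj; rewrite aj eqxx in av.
move=> /orP [H|/existsP [l /andP [eal H]]]; first exact: IH.
case: (eqVneq l v) => [lv|lv].
  rewrite lv sym in eal; case: (hdeg eal) => ->; by rewrite connect0 ?orbT.
have c : connect (del_vertex e v) a l.
  by apply: connect1; rewrite /del_vertex eal av lv.
by case/orP: (IH _ lv H) => c'; rewrite (connect_trans c c') ?orbT.
Qed.

Lemma row_dists j a b : j != v -> e v a -> e v b -> a != v -> b != v ->
  (forall l, e v l -> l = a \/ l = b) ->
  connect e v j ->
  ~~ connect (del_vertex e v) b j ->
  gdist e v j = (gdist e a j).+1 /\ gdist e b j = (gdist e a j).+2.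
Proof.
move=> jv eva evb av bv hd cvj nc.
set k := gdist e v j.
have Hk : within e k v j by exact: gdist_within.
have vj : v != j by rewrite eq_sym.
have [k' [kk' [l [evl Hl]]]] := within_first vj Hk.
have hb : (k < gdist e b j)%N.
  apply: (cut_walk bv nc); apply: gdist_within.
  by apply: connect_trans cvj; apply: connect1; rewrite sym.
have hb' : (gdist e b j <= k.+1)%N.
  by apply: gdist_le; apply: within_edge Hk; rewrite sym.
have caj : connect e a j.
  by apply: connect_trans cvj; apply: connect1; rewrite sym.
have hva : (k <= (gdist e a j).+1)%N.
  by apply: gdist_le; apply: (within_edge eva); apply: gdist_within.
case: (hd _ evl) => el; rewrite el in Hl; have := gdist_le Hl; lia.
Qed.
End Cut.
Unset Implicit Arguments. Set Strict Implicit.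
Local Open Scope ring_scope.

Theorem lemma3p3 (R : realFieldType) (n : nat) (e : rel 'I_n) (u v w : 'I_n) :
  simple_graph e -> connected_graph e ->
  degree e v = 2%N -> cut_vertex e v ->
  e v u -> e v w -> u != w ->
  let x : 'cV[R]_n :=
    \col_i (if (i == u) || (i == w) then 1 else if i == v then -2 else 0) in
  dist_sq_mx R e *m x = const_mx 2.
Proof.
move=> [sym irr] conn deg2 [a [b [av bv nab]]] evu evw uw x.
have uv : u != v by apply: contraTneq evu => ->; rewrite irr.
have wv : w != v by apply: contraTneq evw => ->; rewrite irr.
have hdeg : forall l, e v l -> l = u \/ l = w.
  move=> l evl; case: (eqVneq l u) => [|lu]; first by left.
  case: (eqVneq l w) => [|lw]; first by right.
  move: deg2; rewrite /degree (cardsD1 u) (cardsD1 w) (cardsD1 l) !inE.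
  by rewrite evu evw evl eq_sym uw lu lw.
set D := del_vertex e v.
have reach' : forall z, z != v -> connect D z u || connect D z w.
  move=> z zv; apply: (reach sym hdeg zv); exact: gdist_within.
have ncuw : ~~ connect D u w.
  apply/negP => cuw; move/negP: nab; apply.
  have cu : forall z, z != v -> connect D z u.
    move=> z zv; case/orP: (reach' z zv) => // c.
    by apply: connect_trans c _; rewrite /D (del_connC v sym).
  by apply: connect_trans (cu _ av) _; rewrite /D (del_connC v sym); exact: cu _ bv.
have d1 : forall y, e v y -> gdist e v y = 1%N.
  move=> y evy; apply/eqP; rewrite eqn_leq; apply/andP; split.
    by apply: gdist_le; apply: (within_edge evy); rewrite /= eqxx.
  rewrite lt0n; apply/negP => /eqP h0.
  have := gdist_within (conn v y); rewrite h0 /= => /eqP vy.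
  by rewrite -vy irr in evy.
have hrow : forall i, (gdist e i u ^ 2 + gdist e i w ^ 2 = 2 * gdist e i v ^ 2 + 2)%N.
  move=> i; case: (eqVneq i v) => [->|iv].
    have -> : gdist e v v = 0%N by apply/eqP; rewrite -leqn0; apply: gdist_le; rewrite /= eqxx.
    by rewrite !d1.
  rewrite (gdist_sym i u sym conn) (gdist_sym i w sym conn) (gdist_sym i v sym conn).
  case/orP: (reach' i iv) => ci.
    have nc : ~~ connect D w i.
      apply: contra ncuw => cw; rewrite (del_connC v sym); exact: connect_trans cw ci.
    have [-> ->] := row_dists sym iv evu evw uv wv hdeg (conn v i) nc.
    lia.
  have nc : ~~ connect D u i.
    apply: contra ncuw => cu; exact: connect_trans cu ci.
  have hdeg' : forall l, e v l -> l = w \/ l = u.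
    by move=> l /hdeg [] ->; [right|left].
  have [-> ->] := row_dists sym iv evw evu wv uv hdeg' (conn v i) nc.
  lia.
apply/matrixP => i j; rewrite !mxE.
rewrite (bigD1 u) // (bigD1 w) /=; last by rewrite eq_sym.
rewrite (bigD1 v) /=; last by rewrite !(eq_sym v) uv wv.
rewrite big1 ?addr0; last first.
  move=> k /andP [/andP [ku kw] kv]; rewrite /x !mxE.
  by rewrite (negbTE ku) (negbTE kw) (negbTE kv) mulr0.
rewrite /x !mxE !eqxx /= orbT !(eq_sym v) (negbTE uv) (negbTE wv) /=.
rewrite !mulr1 addrA -natrD hrow natrD natrM.
have -> : (2 : R) = 2%:R by [].
ring.
Qed.
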